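(* Let $\mathcal{F}=C_1\wedge\dots\wedge C_m\sim\mathcal{F}(m,n,d)$ and define the $2^n\times m$ matrix $M$ whose rows are indexed by assignments $\alpha\in\{0,1\}^n$ and columns by clause indices $i\in[m]$, with $M[\alpha,i]=1$ if the $i$th clause is not satisfied by $\alpha$ and $M[\alpha,i]=0$ otherwise. For any $c>2/\log e$, if $m\ge c\,2^d n^2/d$, then the rows of $M$ are pairwise distinct with high probability.
   Context: $\log$ is base 2. $\mathcal{F}(m,n,d)$: random $d$-CNF on $n$ variables with $m$ clauses sampled independently and uniformly with replacement from the $\binom{n}{d}2^d$ clauses on $d$ distinct variables. ''With high probability'' means with probability tending to $1$ as $n\to\infty$. *)

(* Defs.v *)
From HB Require Import structures.
From mathcomp Require Import all_boot all_order all_algebra.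
From mathcomp Require Import all_classical all_reals all_analysis.
Set Implicit Arguments. Unset Strict Implicit. Unset Printing Implicit Defensive.
Import Order.TTheory GRing.Theory Num.Theory.
Local Open Scope ring_scope.

(* A clause on n variables: c i = None if variable i does not occur,
   c i = Some b if the literal on variable i is x_i (b = true) or ~x_i (b = false). *)
Definition raw_clause (n : nat) := {ffun 'I_n -> option bool}.

Definition is_dclause (n d : nat) (c : raw_clause n) : bool :=
  #|[set i | c i != None]| == d.

Definition assignment (n : nat) := {ffun 'I_n -> bool}.

Definition sat_clause (n : nat) (c : raw_clause n) (alpha : assignment n) : bool :=
  [exists i, c i == Some (alpha i)].

(* A formula with m clauses (ordered, with repetition). *)
Definition formula (n m : nat) := {ffun 'I_m -> raw_clause n}.

Definition is_dformula (n m d : nat) (F : formula n m) : bool :=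
  [forall i, is_dclause d (F i)].

Definition unsat_matrix (n m : nat) (F : formula n m) (alpha : assignment n) (i : 'I_m) : bool :=
  ~~ sat_clause (F i) alpha.

Definition rows_distinct (n m : nat) (F : formula n m) : bool :=
  [forall alpha : assignment n, forall beta : assignment n,
     (alpha != beta) ==> ([ffun i => unsat_matrix F alpha i] != [ffun i => unsat_matrix F beta i])].

(* Probability under F(m,n,d): uniform over m-tuples of d-clauses. *)
Definition prob_rows_distinct (R : realType) (n m d : nat) : R :=
  (#|[set F : formula n m | is_dformula d F && rows_distinct F]|%:R /
   #|[set F : formula n m | is_dformula d F]|%:R).

Definition log2 (R : realType) (x : R) : R := ln x / ln 2.

(* Main.v *)
Require Import Defs.
From HB Require Import structures.
From mathcomp Require Import all_boot all_order all_algebra.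
From mathcomp Require Import all_classical all_reals all_analysis.
From mathcomp Require Import ring lra zify.
Import Order.TTheory GRing.Theory Num.Theory.
Import numFieldNormedType.Exports.
Set Implicit Arguments. Unset Strict Implicit. Unset Printing Implicit Defensive.

Lemma k_leq_exp_mono a b e : a <= b -> a ^ e <= b ^ e.
Proof. by move=> ab; elim: e => // e IH; rewrite !expnS leq_mul. Qed.

Lemma k_card_bigcup_le (I T : finType) (P : pred I) (F : I -> {set T}) :
  #|\bigcup_(i | P i) F i| <= \sum_(i | P i) #|F i|.
Proof.
apply: (big_ind2 (fun (S : {set T}) k => #|S| <= k)) => //.
- by rewrite cards0.
- move=> A a B b hA hB; rewrite cardsU; apply: leq_trans (leq_subr _ _) _.
  exact: leq_add.
Qed.

Section Comb.
Variables n d : nat.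

Definition k_Dset := [set c : raw_clause n | is_dclause d c].
Definition k_sup (c : raw_clause n) := [set j | c j != None].
Definition k_falsif (a : assignment n) (S : {set 'I_n}) : raw_clause n :=
  [ffun j => if j \in S then Some (~~ a j) else None].

Lemma k_sup_k_falsif a S : k_sup (k_falsif a S) = S.
Proof. by apply/setP => j; rewrite !inE ffunE; case: (j \in S). Qed.

Lemma k_falsif_unsat a S : ~~ sat_clause (k_falsif a S) a.
Proof.
rewrite /sat_clause negb_exists; apply/forallP => j; rewrite ffunE.
by case: (j \in S) => //; case: (a j).
Qed.

Lemma k_falsif_sat (a b : assignment n) (S : {set 'I_n}) i : i \in S -> a i != b i -> sat_clause (k_falsif a S) b.
Proof.
move=> iS ab; apply/existsP; exists i; rewrite ffunE iS.
by move: ab; case: (a i); case: (b i).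
Qed.

Lemma k_card_D_le : #|k_Dset| <= 2 ^ d * 'C(n, d).
Proof.
pose enc (c : raw_clause n) := (k_sup c, [set j | c j == Some true]).
have enc_inj : injective enc.
  move=> c1 c2 [] /setP H1 /setP H2; apply/ffunP => j; move: (H1 j) (H2 j); rewrite !inE.
  by case: (c1 j) => [[]|]; case: (c2 j) => [[]|].
pose X := [set p : {set 'I_n} * {set 'I_n} | (#|p.1| == d) && (p.2 \subset p.1)].
have sub : enc @: k_Dset \subset X.
  apply/fintype.subsetP => _ /imsetP [c cD ->]; rewrite inE /=; rewrite inE /is_dclause in cD.
  rewrite cD; apply/fintype.subsetP => j; rewrite !inE; by case: (c j).
have cardX : #|X| = 2 ^ d * 'C(n, d).
  rewrite -sum1_card.
  rewrite (eq_bigl (fun p : {set 'I_n} * {set 'I_n} => (#|p.1| == d) && (p.2 \subset p.1))); last first.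
    by move=> p; rewrite inE.
  rewrite -(pair_big_dep (fun S : {set 'I_n} => #|S| == d) (fun S T : {set 'I_n} => T \subset S) (fun _ _ => 1)) /=.
  transitivity (\sum_(S : {set 'I_n} | #|S| == d) 2 ^ d).
    apply: eq_bigr => S /eqP hS.
    rewrite -hS -card_powerset -sum1_card; apply: eq_bigl => T; by rewrite powersetE.
  by rewrite sum_nat_cond_const card_draws card_ord mulnC.
rewrite -cardX -(card_imset _ enc_inj); exact: subset_leq_card.
Qed.

Lemma k_card_Dist (a b : assignment n) i : a i != b i -> 0 < d ->
  2 * 'C(n.-1, d.-1) <= #|k_Dset :\: [set c | sat_clause c a == sat_clause c b]|.
Proof.
move=> ab d0.
pose T' := {j : 'I_n | j != i}.
pose h (A : {set T'}) : {set 'I_n} := i |: [set val x | x in A].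
pose g (p : bool * {set T'}) := k_falsif (if p.1 then a else b) (h p.2).
pose Dom := finset.setX [set: bool] [set A : {set T'} | #|A| == d.-1].
have cardDom : #|Dom| = 2 * 'C(n.-1, d.-1).
  by rewrite cardsX cardsT card_bool card_draws card_sig cardC1 card_ord.
have cardh A : #|h A| = #|A|.+1.
  rewrite cardsU1 card_imset; last exact: val_inj.
  suff -> : i \notin [set val x | x in A] by [].
  apply/imsetP => -[x _ ex]; by move: (valP x); rewrite -ex eqxx.
have ginj : {in Dom &, injective g}.
  move=> [b1 A1] [b2 A2] _ _ /= E.
  have Ei := congr1 (fun f : raw_clause n => f i) E; rewrite /= !ffunE !setU11 in Ei.
  have eb : b1 = b2.
    move: Ei ab; case: (b1); case: (b2) => //=; case: (a i); case: (b i) => //.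
  subst b2; congr pair.
  have := congr1 k_sup E; rewrite !k_sup_k_falsif => Eh.
  apply/setP => x; move/setP: Eh => /(_ (val x)); rewrite /h.
  by rewrite /= !in_setU1 (negbTE (valP x)) /= !(mem_imset _ _ val_inj).
rewrite -cardDom -(card_in_imset ginj); apply: subset_leq_card.
apply/fintype.subsetP => _ /imsetP [[b1 A] pD ->].
rewrite inE in pD; case/andP: pD => _; rewrite inE => /eqP hA.
rewrite !inE /is_dclause -/(k_sup _) k_sup_k_falsif cardh hA (prednK d0) eqxx andbT.
case: (b1) => /=.
- by rewrite (negbTE (k_falsif_unsat _ _)) (k_falsif_sat _ ab) ?setU11.
- rewrite (negbTE (k_falsif_unsat _ _)) (k_falsif_sat (i:=i)) ?setU11 //.
  by rewrite eq_sym.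
Qed.

Variable m : nat.

Definition k_Bad := [set F : formula n m | is_dformula d F && ~~ rows_distinct F].
Definition k_Good := [set F : formula n m | is_dformula d F && rows_distinct F].
Definition k_Tot := [set F : formula n m | is_dformula d F].

Lemma k_card_Tot : #|k_Tot| = #|k_Dset| ^ m.
Proof.
transitivity #|ffun_on_mem 'I_m (mem k_Dset)|; last by rewrite card_ffun_on card_ord.
apply: eq_card => F.
rewrite !inE; apply/forallP/ffun_onP => H x; move: (H x); by rewrite inE.
Qed.

Lemma k_card_GoodBad : #|k_Good| + #|k_Bad| = #|k_Tot|.
Proof.
rewrite -(cardsID [set F : formula n m | rows_distinct F] k_Tot); congr addn.
  by apply: eq_card => F; rewrite !inE.
by apply: eq_card => F; rewrite !inE andbC.
Qed.

Lemma k_card_Bad_le : 0 < d ->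
  #|k_Bad| <= 2 ^ n * 2 ^ n * (#|k_Dset| - 2 * 'C(n.-1, d.-1)) ^ m.
Proof.
move=> d0.
pose G (a b : assignment n) := k_Dset :&: [set c | sat_clause c a == sat_clause c b].
pose U := \bigcup_(p : assignment n * assignment n | p.1 != p.2)
            [set F : formula n m | F \in ffun_on (G p.1 p.2)].
have sub : k_Bad \subset U.
  apply/fintype.subsetP => F; rewrite inE => /andP [dF].
  rewrite /rows_distinct negb_forall => /existsP [a].
  rewrite negb_forall => /existsP [b]; rewrite negb_imply negbK => /andP [ab /eqP E].
  apply/bigcupP; exists (a, b) => //; rewrite inE; apply/ffun_onP => x.
  have := congr1 (fun f : {ffun 'I_m -> bool} => f x) E; rewrite /= !ffunE /unsat_matrix.
  move/negb_inj => E2; rewrite !inE E2 eqxx andbT.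
  by move/forallP: dF => /(_ x).
apply: leq_trans (subset_leq_card sub) _.
apply: leq_trans (k_card_bigcup_le _ _) _.
apply: (@leq_trans (\sum_(p : assignment n * assignment n) (#|k_Dset| - 2 * 'C(n.-1, d.-1)) ^ m)).
  rewrite big_mkcond; apply: leq_sum => -[a b] _ /=; case: ifP => // ab.
  rewrite cardsE card_ffun_on card_ord; apply: k_leq_exp_mono.
  have [i hi] : exists i, a i != b i.
    apply/existsP; apply: contraR ab => /existsPn H.
    apply/eqP/ffunP => j; apply/eqP; move: (H j); by rewrite negbK.
  have H := k_card_Dist hi d0.
  by rewrite /G -(cardsID [set c | sat_clause c a == sat_clause c b] k_Dset) -addnBA // leq_addr.
by rewrite sum_nat_cond_const cardsT card_prod card_ffun card_bool card_ord.
Qed.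

End Comb.

Local Open Scope ring_scope.

Lemma real_bound (R : realType) (K B G Cn C1 n d m : nat) (c : R) :
  (G + B = K ^ m)%N -> (B <= 2 ^ n * 2 ^ n * (K - 2 * C1) ^ m)%N -> (2 * C1 <= K)%N ->
  (K <= 2 ^ d * Cn)%N ->
  (n * C1 = d * Cn)%N -> (0 < C1)%N -> (0 < d)%N -> (0 < n)%N -> 0 < c ->
  c * 2 ^+ d * (n%:R) ^+ 2 / (d%:R) <= (m%:R) ->
  1 - (4 * expR (- (2 * c))) ^+ n <= G%:R / (K ^ m)%:R :> R.
Proof.
move=> hGB hB h2C hK hbin C1p dp np cp hm.
have Kp : (0 < K)%N by apply: leq_trans h2C; rewrite muln_gt0.
have kp : 0 < K%:R :> R by rewrite ltr0n.
have kmp : 0 < (K ^ m)%:R :> R by rewrite ltr0n expn_gt0 Kp.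
have eG : G%:R = (K ^ m)%:R - B%:R :> R by rewrite -hGB natrD addrK.
rewrite eG mulrBl divff ?gt_eqF // lerD2l lerN2.
set k := K%:R : R.
set x := 1 - (2 * C1)%:R / k.
have xk : x * k = (K - 2 * C1)%N%:R.
  by rewrite natrB // /x mulrBl mul1r -mulrA mulVf ?gt_eqF // mulr1.
have hx0 : 0 <= x.
  rewrite /x subr_ge0 ler_pdivrMr // mul1r /k ler_nat //.
have hB1 : B%:R / (K ^ m)%:R <= 2 ^+ n * 2 ^+ n * x ^+ m :> R.
  rewrite ler_pdivrMr // natrX -/k -!mulrA -exprMn xk -natrX.
  by rewrite -natrX -!natrM ler_nat mulnA.
set r : R := (2 * C1)%:R / (2 ^ d * Cn)%:R.
have Cnp : (0 < Cn)%N.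
  by rewrite lt0n; apply/eqP => C0; move: hK; rewrite C0 muln0 leqn0 => /eqP K0; move: Kp; rewrite K0.
have hxr : x <= 1 - r.
  rewrite /x lerD2l lerN2 /r ler_wpM2l // lef_pV2 ?ler_nat // posrE ltr0n //.
  by rewrite muln_gt0 expn_gt0 Cnp.
have hr : 1 - r <= expR (- r) by rewrite -[1 - r]/(1 + - r) expR_ge1Dx.
have hxm : x ^+ m <= expR (- r) ^+ m.
  apply: lerXn2r; rewrite ?nnegrE //.
  exact: le_trans hxr hr.
have hrm : 2 * c * n%:R <= r * m%:R.
  have r0 : 0 <= r by rewrite /r divr_ge0.
  apply: le_trans (ler_wpM2l r0 hm).
  have eCn : Cn%:R = n%:R * C1%:R / d%:R :> R.
    by rewrite -natrM hbin natrM [d%:R * _]mulrC mulfK // pnatr_eq0 -lt0n.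
  rewrite /r natrM natrM natrX eCn.
  have : n%:R != 0 :> R by rewrite pnatr_eq0 -lt0n.
  have : d%:R != 0 :> R by rewrite pnatr_eq0 -lt0n.
  have : C1%:R != 0 :> R by rewrite pnatr_eq0 -lt0n.
  move=> h1 h2 h3; rewrite le_eqVlt; apply/orP; left; apply/eqP. field.
  by rewrite h1 h2 h3 /= expf_neq0 // pnatr_eq0.
have hE : expR (- r) ^+ m <= expR (- (2 * c)) ^+ n.
  rewrite -!expRM_natl ler_expR.
  by rewrite !mulrN lerN2 mulrC [m%:R * _]mulrC.
apply: le_trans hB1 _.
have h4 : (4 : R) = 2 * 2 by rewrite -natrM.
rewrite h4 !exprMn -!mulrA ler_wpM2l ?exprn_ge0 //.
rewrite ler_wpM2l ?exprn_ge0 //.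
exact: le_trans hxm hE.
Qed.

Local Open Scope classical_set_scope.

Theorem mainTheorem8 (R : realType) (c : R) (d m : nat -> nat) :
  c > 2 / log2 (expR 1) ->
  (exists N : nat, forall n : nat, (N <= n)%N ->
     [/\ (1 <= d n)%N, (d n <= n)%N &
         c * 2 ^+ d n * (n%:R) ^+ 2 / (d n)%:R <= (m n)%:R]) ->
  (fun n => prob_rows_distinct R n (m n) (d n)) @ \oo --> (1 : R).
Proof.
move=> hc [N HN].
have ln2p : 0 < ln (2 : R) by apply: ln_gt0; rewrite ltr1n.
have hc' : 2 * ln (2 : R) < c.
  by move: hc; rewrite /log2 expRK div1r invrK.
have c0 : 0 < c by lra.
set rho := 4 * expR (- (2 * c)).
have e2 : expR (ln (2 : R)) = 2 by rewrite lnK // posrE ltr0n.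
have rho1 : rho < 1.
  rewrite /rho -[X in X * _ < _](_ : expR (ln 2 + ln 2) = 4); last first.
    by rewrite expRD e2 -natrM.
  rewrite -expRD -[X in _ < X]expR0 ltr_expR; lra.
have rho0 : 0 <= rho by rewrite /rho mulr_ge0 // expR_ge0.
apply: (@squeeze_cvgr _ _ _ _ (fun n => 1 - rho ^+ n) (fun _ => 1)).
- exists N => // n /= Nn.
  have [d1 dn hm] := HN n Nn.
  have np : (0 < n)%N by apply: leq_trans d1 dn.
  set K := #|k_Dset n (d n)|.
  have hGB := k_card_GoodBad n (d n) (m n).
  have hT := k_card_Tot n (d n) (m n).
  have hB := @k_card_Bad_le n (d n) (m n) d1.
  have h2C : (2 * 'C(n.-1, (d n).-1) <= K)%N.
    have := @k_card_Dist n (d n) [ffun=> false] [ffun=> true] (Ordinal np).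
    rewrite !ffunE => /(_ isT d1) H; apply: leq_trans H _.
    by apply: subset_leq_card; apply: subsetDl.
  have hK := k_card_D_le n (d n).
  have hbin : (n * 'C(n.-1, (d n).-1) = d n * 'C(n, d n))%N.
    by rewrite mul_bin_diag prednK.
  have C1p : (0 < 'C(n.-1, (d n).-1))%N by rewrite bin_gt0; lia.
  have Tp : (0 < #|k_Tot n (d n) (m n)|)%N.
    by rewrite hT expn_gt0; apply/orP; left; apply: leq_trans h2C; rewrite muln_gt0.
  rewrite /prob_rows_distinct -/(k_Good n (d n) (m n)) -/(k_Tot n (d n) (m n)).
  apply/andP; split.
    have hGB' := hGB; rewrite hT in hGB'.
    rewrite hT; exact: (real_bound hGB' hB h2C hK hbin C1p d1 np c0 hm).
  rewrite ler_pdivrMr ?ltr0n // mul1r ler_nat -hGB; exact: leq_addr.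
- rewrite -[X in _ --> X](subr0 1); apply: cvgB; first exact: cvg_cst.
  apply: cvg_expr; by rewrite ger0_norm.
- exact: cvg_cst.
Qed.
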